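(* Let $\kappa,\lambda$ be regular cardinals with $\kappa^+<\lambda$, and let $S\subseteq\{\delta<\lambda:\operatorname{cf}\delta=\kappa\}$ be stationary in $\lambda$. Let $\langle c_\delta:\delta\in S\rangle$ be any sequence such that each $c_\delta\subseteq\delta$ is a club of $\delta$ of order type $\kappa$, and let $E'\subseteq\lambda$ be a club. Then there is a club $E\subseteq E'$ such that, setting $c'_\delta=\operatorname{Drop}(c_\delta,E)$ for $\delta\in S$, the following hold: (1) each $c'_\delta$ is a closed subset of $\delta$; (2) for every club $E''\subseteq\lambda$ the set $\{\delta\in S: c'_\delta\subseteq E'',\ \sup c'_\delta=\delta,\ \operatorname{otp}c'_\delta=\kappa\}$ is stationary in $\lambda$.
   Context: For a set of ordinals $c$ and an ordinal $\alpha$: if $c\cap\alpha\neq\emptyset$, $\operatorname{drop}(\alpha,c)=\sup(c\cap\alpha)$; if $c\cap\alpha=\emptyset$, $\operatorname{drop}(\alpha,c)$ is undefined. For sets of ordinals $X,c$, $\operatorname{Drop}(X,c)=\{\operatorname{drop}(\alpha,c):\alpha\in X\}$ (over those $\alpha$ for which it is defined). $\operatorname{otp}$ denotes order type. *)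

(* Defs.v *)
(* Ordinals below lambda are modelled as the elements of an
   arbitrary type T equipped with a strict well-order [lt]; lambda itself is
   the order type of (T, lt). *)
From Stdlib Require Import Classical.

Section Ordinals.
Context {T : Type}.
Variable lt : T -> T -> Prop.

Definition is_wellorder : Prop :=
  (forall x, ~ lt x x) /\
  (forall x y z, lt x y -> lt y z -> lt x z) /\
  (forall x y, lt x y \/ x = y \/ lt y x) /\
  well_founded lt.

Definition le (x y : T) : Prop := lt x y \/ x = y.

Definition otp (X : T -> Prop) (alpha : T) : Prop :=
  exists f : T -> T,
    (forall x, X x -> lt (f x) alpha) /\
    (forall x y, X x -> X y -> lt x y -> lt (f x) (f y)) /\
    (forall b, lt b alpha -> exists x, X x /\ f x = b).

(* otp X = lambda (the order type of the whole of T) *)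
Definition otp_full (X : T -> Prop) : Prop := ~ exists alpha, otp X alpha.

Definition is_sup (X : T -> Prop) (a : T) : Prop :=
  (forall x, X x -> le x a) /\ (forall b, (forall x, X x -> le x b) -> le a b).

(* drop(alpha, c) = sup (c ∩ alpha), defined when c ∩ alpha ≠ ∅ *)
Definition Drop (X c : T -> Prop) : T -> Prop :=
  fun b => exists alpha, X alpha /\ (exists y, c y /\ lt y alpha) /\
           is_sup (fun y => c y /\ lt y alpha) b.

Definition subset (X Y : T -> Prop) : Prop := forall x, X x -> Y x.

Definition limit_point (X : T -> Prop) (gamma : T) : Prop :=
  (exists x, X x /\ lt x gamma) /\
  (forall b, lt b gamma -> exists x, X x /\ lt b x /\ lt x gamma).

Definition closed_below (delta : T) (X : T -> Prop) : Prop :=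
  subset X (fun x => lt x delta) /\
  (forall gamma, lt gamma delta -> limit_point X gamma -> X gamma).

Definition club_of (delta : T) (X : T -> Prop) : Prop :=
  closed_below delta X /\
  (forall b, lt b delta -> exists x, X x /\ lt b x).

Definition club (X : T -> Prop) : Prop :=
  (forall gamma, limit_point X gamma -> X gamma) /\
  (forall b, exists x, X x /\ lt b x).

Definition stationary (S : T -> Prop) : Prop :=
  forall C, club C -> exists d, S d /\ C d.

Definition cofinal_in (delta : T) (X : T -> Prop) : Prop :=
  subset X (fun x => lt x delta) /\
  (forall b, lt b delta -> exists x, X x /\ le b x).

Definition cf_eq (delta kappa : T) : Prop :=
  (exists X, cofinal_in delta X /\ otp X kappa) /\
  (forall X alpha, cofinal_in delta X -> otp X alpha -> le kappa alpha).

Definition equinum (alpha beta : T) : Prop :=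
  exists f : T -> T,
    (forall x, lt x alpha -> lt (f x) beta) /\
    (forall x y, lt x alpha -> lt y alpha -> f x = f y -> x = y) /\
    (forall b, lt b beta -> exists x, lt x alpha /\ f x = b).

Definition is_cardinal (alpha : T) : Prop :=
  forall beta, lt beta alpha -> ~ equinum alpha beta.

(* nonzero limit ordinal; for a cardinal this means infinite *)
Definition nonzero_limit (alpha : T) : Prop :=
  (exists b, lt b alpha) /\ (forall b, lt b alpha -> exists g, lt b g /\ lt g alpha).

Definition regular (kappa : T) : Prop :=
  is_cardinal kappa /\ nonzero_limit kappa /\ cf_eq kappa kappa.

Definition lambda_regular : Prop :=
  (forall beta, ~ exists f : T -> T,
      (forall x, lt (f x) beta) /\ (forall x y, f x = f y -> x = y) /\
      (forall b, lt b beta -> exists x, f x = b)) /\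
  (exists x : T, True) /\ (forall b, exists g, lt b g) /\
  (* cf lambda = lambda *)
  (forall X, (forall b, exists x, X x /\ le b x) -> otp_full X).

(* kappa^+ < lambda: some cardinal mu < lambda exceeds kappa *)
Definition succ_lt_lambda (kappa : T) : Prop :=
  exists mu, lt kappa mu /\ is_cardinal mu.

End Ordinals.

(* Main.v *)
Require Import Defs.
From Stdlib Require Import Classical ClassicalEpsilon FunctionalExtensionality Arith Lia Cantor Wellfounded.

Section Dev.
Context {T : Type} (R : T -> T -> Prop) (Hwo : is_wellorder R) (Hinh : inhabited T).

Lemma irr x : ~ R x x. Proof. apply Hwo. Qed.
Lemma trans x y z : R x y -> R y z -> R x z. Proof. apply Hwo. Qed.
Lemma trich x y : R x y \/ x = y \/ R y x. Proof. apply Hwo. Qed.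
Lemma wf : well_founded R. Proof. apply Hwo. Qed.

Lemma le_refl x : le R x x. Proof. right; auto. Qed.
Lemma lt_le x y : R x y -> le R x y. Proof. left; auto. Qed.
Lemma le_trans x y z : le R x y -> le R y z -> le R x z.
Proof. intros [H|H] [H'|H']; subst; unfold le; eauto using trans. Qed.
Lemma lt_le_trans x y z : R x y -> le R y z -> R x z.
Proof. intros H [H'|H']; subst; eauto using trans. Qed.
Lemma le_lt_trans x y z : le R x y -> R y z -> R x z.
Proof. intros [H|H] H'; subst; eauto using trans. Qed.
Lemma not_lt_le x y : ~ R x y -> le R y x.
Proof. intros H. destruct (trich x y) as [h|[h|h]]; [tauto| subst; apply le_refl | left; auto]. Qed.
Lemma le_not_lt x y : le R x y -> ~ R y x.
Proof. intros H H'. apply (irr x). eapply le_lt_trans; eauto. Qed.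
Lemma le_antisym x y : le R x y -> le R y x -> x = y.
Proof. intros [H|H] H'; auto. exfalso; eapply le_not_lt; eauto. Qed.
Lemma lt_ne x y : R x y -> x <> y.
Proof. intros H ->; eapply irr; eauto. Qed.

Lemma wf_min (P : T -> Prop) : (exists x, P x) -> exists x, P x /\ forall y, P y -> le R x y.
Proof.
  intros [x Hx]. apply NNPP; intro Hn.
  assert (forall y, ~ P y) as Hall.
  { intro y. induction y as [y IH] using (well_founded_ind wf). intro Py.
    apply Hn. exists y. split; auto. intros y' Py'. apply not_lt_le. intro h. exact (IH _ h Py'). }
  exact (Hall x Hx).
Qed.

Definition least (P : T -> Prop) : T := epsilon Hinh (fun x => P x /\ forall y, P y -> le R x y).
Lemma least_spec P : (exists x, P x) -> P (least P) /\ forall y, P y -> le R (least P) y.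
Proof. intro H. unfold least. apply epsilon_spec. apply wf_min; auto. Qed.

Lemma fix_unfold {A : Type} (F : forall x, (forall y, R y x -> A) -> A) x :
  Fix wf (fun _ => A) F x = F x (fun y _ => Fix wf (fun _ => A) F y).
Proof.
  apply (Fix_eq wf (fun _ => A) F). intros x0 f g H. f_equal.
  apply functional_extensionality_dep; intro y. apply functional_extensionality_dep; intro p. auto.
Qed.

Section Coll.
Variable Y : T -> Prop.
Definition coll : T -> T := Fix wf (fun _ => T)
  (fun y rec => least (fun t => forall y' (H : R y' y), Y y' -> R (rec y' H) t)).
Lemma coll_eq y : coll y = least (fun t => forall y', R y' y -> Y y' -> R (coll y') t).
Proof. unfold coll at 1. rewrite fix_unfold. reflexivity. Qed.

Lemma coll_le y : Y y -> le R (coll y) y /\ forall y', R y' y -> Y y' -> R (coll y') (coll y).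
Proof.
  induction y as [y IH] using (well_founded_ind wf). intro Yy.
  assert (Hex : exists t, forall y', R y' y -> Y y' -> R (coll y') t).
  { exists y. intros y' h Yy'. eapply le_lt_trans. apply (IH _ h Yy'). auto. }
  destruct (least_spec _ Hex) as [H1 H2]. rewrite coll_eq. split; auto.
  apply H2. intros y' h Yy'. eapply le_lt_trans. apply (IH _ h Yy'). auto.
Qed.

Lemma coll_strict x y : Y x -> Y y -> R x y -> R (coll x) (coll y).
Proof. intros Hx Hy h. apply (coll_le y Hy); auto. Qed.

Lemma coll_inj x y : Y x -> Y y -> coll x = coll y -> x = y.
Proof.
  intros Hx Hy He. destruct (trich x y) as [h|[h|h]]; auto.
  - apply coll_strict in h; auto. rewrite He in h. destruct (irr _ h).
  - apply coll_strict in h; auto. rewrite He in h. destruct (irr _ h).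
Qed.

Lemma coll_down y : Y y -> forall b, R b (coll y) -> exists x, Y x /\ coll x = b.
Proof.
  induction y as [y IH] using (well_founded_ind wf). intros Yy b Hb.
  assert (Hex : exists t, forall y', R y' y -> Y y' -> R (coll y') t).
  { exists (coll y). intros y' h Yy'. apply coll_strict; auto. }
  destruct (least_spec _ Hex) as [H1 H2]. rewrite <- coll_eq in H2.
  assert (~ forall y', R y' y -> Y y' -> R (coll y') b) as Hn.
  { intro Hb'. apply H2 in Hb'. eapply le_not_lt; eauto. }
  apply not_all_ex_not in Hn. destruct Hn as [y' Hn].
  apply imply_to_and in Hn. destruct Hn as [h Hn]. apply imply_to_and in Hn. destruct Hn as [Yy' Hn].
  apply not_lt_le in Hn. destruct Hn as [Hn|Hn].
  - eapply IH; eauto.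
  - exists y'; auto.
Qed.

Lemma coll_otp : (exists t, forall y, Y y -> coll y <> t) ->
  exists beta, (forall t, (forall y, Y y -> coll y <> t) -> le R beta t) /\
    (forall x, Y x -> R (coll x) beta) /\
    (forall b, R b beta -> exists x, Y x /\ coll x = b).
Proof.
  intro Hex. destruct (least_spec _ Hex) as [H1 H2].
  set (beta := least _) in *. exists beta. split; [auto|split].
  - intros x Yx. destruct (trich (coll x) beta) as [h|[h|h]]; auto.
    + exfalso; eapply H1; eauto.
    + destruct (coll_down x Yx _ h) as [x' [Yx' e]]. exfalso; eapply H1; eauto.
  - intros b hb. apply NNPP; intro Hn.
    assert (forall y, Y y -> coll y <> b) as Hb.
    { intros y Yy e. apply Hn. eauto. }
    apply H2 in Hb. eapply le_not_lt; eauto.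
Qed.

Lemma coll_bounded z : (forall y, Y y -> R y z) ->
  exists beta, le R beta z /\ otp R Y beta.
Proof.
  intro Hz. destruct coll_otp as [beta [H1 [H2 H3]]].
  { exists z. intros y Yy e. destruct (coll_le y Yy) as [h _]. rewrite e in h.
    eapply le_not_lt; eauto. }
  exists beta. split.
  - apply H1. intros y Yy e. destruct (coll_le y Yy) as [h _]. rewrite e in h. eapply le_not_lt; eauto.
  - exists coll. split; [auto|split]; auto. intros; apply coll_strict; auto.
Qed.

Lemma coll_full : ~ (exists beta, otp R Y beta) ->
  forall t, exists y, Y y /\ coll y = t.
Proof.
  intros Hn t. apply NNPP; intro Ht. apply Hn.
  destruct coll_otp as [beta [H1 [H2 H3]]].
  { exists t. intros y Yy e. apply Ht. eauto. }
  exists beta, coll. split; [auto|split]; auto. intros; apply coll_strict; auto.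
Qed.
End Coll.

Lemma inj_collapse (D : T -> Prop) (h : T -> T) z :
  (forall x, D x -> R (h x) z) -> (forall x y, D x -> D y -> h x = h y -> x = y) ->
  exists beta f, le R beta z /\ (forall x, D x -> R (f x) beta) /\
     (forall x y, D x -> D y -> f x = f y -> x = y) /\
     (forall b, R b beta -> exists x, D x /\ f x = b).
Proof.
  intros Hz Hinj. set (Y := fun y => exists x, D x /\ h x = y).
  destruct (coll_otp Y) as [beta [H1 [H2 H3]]].
  { exists z. intros y Yy e. destruct (coll_le Y y Yy) as [hh _]. rewrite e in hh.
    destruct Yy as [x [Dx <-]]. eapply le_not_lt; eauto. }
  exists beta, (fun x => coll Y (h x)). split; [|split; [|split]].
  - apply H1. intros y Yy e. destruct (coll_le Y y Yy) as [hh _]. rewrite e in hh.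
    destruct Yy as [x [Dx <-]]. eapply le_not_lt; eauto.
  - intros x Dx. apply H2. exists x; auto.
  - intros x y Dx Dy e. apply coll_inj in e; try (eexists; eauto). auto.
  - intros b hb. destruct (H3 b hb) as [y [[x [Dx <-]] e]]. eauto.
Qed.

Context (Hlam : lambda_regular R).

Lemma unbT b : exists g, R b g.
Proof. destruct Hlam as [_ [_ [Hub _]]]. auto. Qed.

Lemma reg_fun (I : T -> Prop) z (F : T -> T) : (forall e, I e -> R e z) ->
  exists c, forall e, I e -> R (F e) c.
Proof.
  intro Hz. apply NNPP; intro Hn.
  assert (Hcof : forall b, exists x, (exists e, I e /\ F e = x) /\ le R b x).
  { intro b. apply NNPP; intro H. apply Hn. exists b. intros e Ie. apply NNPP; intro h.
    apply H. exists (F e). split; eauto. apply not_lt_le in h. auto. }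
  set (Y := fun x => exists e, I e /\ F e = x).
  destruct Hlam as [Hcard [_ [_ Hcf]]].
  pose proof (Hcf Y Hcof) as Hfull.
  pose proof (coll_full Y Hfull) as Hsurj.
  set (yt := fun t => epsilon Hinh (fun y => Y y /\ coll Y y = t)).
  assert (Hyt : forall t, Y (yt t) /\ coll Y (yt t) = t).
  { intro t. apply epsilon_spec. auto. }
  set (inj := fun t => least (fun e => I e /\ F e = yt t)).
  assert (Hinj : forall t, I (inj t) /\ F (inj t) = yt t).
  { intro t. apply (least_spec (fun e => I e /\ F e = yt t)). destruct (Hyt t) as [[e He] _].
    exists e. destruct He; split; auto. }
  destruct (inj_collapse (fun _ => True) inj z) as [beta [f [_ [H1 [H2 H3]]]]].
  - intros x _. apply Hz, Hinj.
  - intros x y _ _ e. rewrite <- (proj2 (Hyt x)), <- (proj2 (Hyt y)).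
    rewrite <- (proj2 (Hinj x)), <- (proj2 (Hinj y)), e. reflexivity.
  - apply (Hcard beta). exists f. split; [intros; apply H1; auto| split; [intros; apply H2; auto|]].
    intros b hb; destruct (H3 b hb) as [x [_ ?]]; eauto.
Qed.

Lemma reg_rel (I : T -> Prop) z (Q : T -> T -> Prop) : (forall e, I e -> R e z) ->
  (forall e, I e -> exists c, forall y, Q e y -> R y c) ->
  exists c, forall e, I e -> forall y, Q e y -> R y c.
Proof.
  intros Hz HQ. set (F := fun e => least (fun c => forall y, Q e y -> R y c)).
  destruct (reg_fun I z F Hz) as [c Hc]. exists c. intros e Ie y Qy.
  destruct (least_spec (fun c => forall y, Q e y -> R y c) (HQ e Ie)) as [h1 _].
  eapply trans. apply h1; eauto. apply Hc; auto.
Qed.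

Lemma bound2 (P Q : T -> Prop) : (exists c, forall y, P y -> R y c) ->
  (exists c, forall y, Q y -> R y c) -> exists c, forall y, P y \/ Q y -> R y c.
Proof.
  intros [c1 H1] [c2 H2]. destruct (trich c1 c2) as [h|[h|h]].
  - exists c2. intros y [Py|Qy]; eauto using trans.
  - subst. exists c2. intros y [Py|Qy]; auto.
  - exists c1. intros y [Py|Qy]; eauto using trans.
Qed.

Context (kappa : T) (Hk : nonzero_limit R kappa).

Lemma common_limit (I : T -> Prop) z (C : T -> T -> Prop) :
  (forall e, I e -> R e z) -> (forall e, I e -> forall b, exists x, C e x /\ R b x) ->
  forall b0, exists g, R b0 g /\ forall e, I e -> limit_point R (C e) g.
Proof.
  intros Hz HC b0.
  set (m := fun e x => least (fun y => C e y /\ R x y)).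
  assert (Hm : forall e x, I e -> C e (m e x) /\ R x (m e x)).
  { intros e x Ie. apply (least_spec (fun y => C e y /\ R x y)). apply HC; auto. }
  set (Pt := fun (f : T -> T) xi t => R b0 t /\ forall xi', R xi' xi -> R (f xi') t /\
              forall e, I e -> R (m e (f xi')) t).
  set (s := Fix wf (fun _ => T) (fun xi rec => least (fun t => R b0 t /\
     forall xi' (H : R xi' xi), R (rec xi' H) t /\ forall e, I e -> R (m e (rec xi' H)) t))).
  assert (Hs : forall xi, s xi = least (Pt s xi)).
  { intro xi. unfold s at 1. rewrite fix_unfold. reflexivity. }
  assert (Hex : forall xi, exists t, Pt s xi t).
  { intro xi.
    destruct (reg_rel (fun xi' => R xi' xi) xi
      (fun xi' y => y = s xi' \/ exists e, I e /\ y = m e (s xi'))) as [c1 Hc1].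
    - auto.
    - intros xi' _. apply bound2.
      + destruct (unbT (s xi')) as [g Hg]. exists g. intros y ->. auto.
      + destruct (reg_fun I z (fun e => m e (s xi')) Hz) as [c Hc]. exists c.
        intros y [e [Ie ->]]. auto.
    - destruct (bound2 (fun y => y = b0) (fun y => exists xi', R xi' xi /\
        (y = s xi' \/ exists e, I e /\ y = m e (s xi')))) as [c Hc].
      + destruct (unbT b0) as [g Hg]. exists g. intros y ->; auto.
      + exists c1. intros y [xi' [h1 h2]]. eapply Hc1; eauto.
      + exists c. split. apply Hc; auto. intros xi' h. split. apply Hc; right; eauto.
        intros e Ie. apply Hc. right. exists xi'. split; auto. right; eauto. }
  assert (Hs' : forall xi, Pt s xi (s xi)).
  { intro xi. pose proof (proj1 (least_spec _ (Hex xi))) as H. rewrite <- Hs in H. exact H. }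
  destruct (reg_fun (fun xi => R xi kappa) kappa s) as [c Hc]; auto.
  set (gam := least (fun g => forall xi, R xi kappa -> le R (s xi) g)).
  destruct (least_spec (fun g => forall xi, R xi kappa -> le R (s xi) g)) as [G1 G2].
  { exists c. intros; apply lt_le; auto. }
  fold gam in G1, G2.
  destruct Hk as [[xi0 Hxi0] Hlim].
  exists gam. split.
  { eapply lt_le_trans. apply (Hs' xi0). apply G1; auto. }
  intros e Ie. split.
  - destruct (Hlim xi0 Hxi0) as [xi1 [h1 h2]]. exists (m e (s xi0)). split. apply Hm; auto.
    eapply lt_le_trans. apply (Hs' xi1); auto. apply G1; auto.
  - intros b hb.
    assert (~ forall xi, R xi kappa -> le R (s xi) b) as Hn.
    { intro H. apply G2 in H. eapply le_not_lt; eauto. }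
    apply not_all_ex_not in Hn. destruct Hn as [xi Hn]. apply imply_to_and in Hn.
    destruct Hn as [hxi Hn]. assert (R b (s xi)) as hb'.
    { destruct (trich b (s xi)) as [h|[h|h]]; auto; exfalso; apply Hn; [subst; apply le_refl| apply lt_le; auto]. }
    destruct (Hlim xi hxi) as [xi1 [h1 h2]].
    exists (m e (s xi)). split. apply Hm; auto. split. eapply trans; eauto. apply Hm; auto.
    eapply lt_le_trans. apply (Hs' xi1); auto. apply G1; auto.
Qed.

Lemma limit_point_mono (X Y : T -> Prop) g : subset X Y -> limit_point R X g -> limit_point R Y g.
Proof.
  intros Hs [[x [Xx hx]] H]. split. exists x; auto.
  intros b hb. destruct (H b hb) as [y [Xy hy]]. exists y; auto.
Qed.

Lemma club_ext (X Y : T -> Prop) : (forall x, X x <-> Y x) -> club R X -> club R Y.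
Proof.
  intros He [Hc Hu]. split.
  - intros g Hg. apply He, Hc. apply (limit_point_mono Y X); [intros x hx; apply He; auto | auto].
  - intros b. destruct (Hu b) as [x [Xx h]]. exists x. split; auto. apply He; auto.
Qed.

Lemma club_inter (I : T -> Prop) z (C : T -> T -> Prop) :
  (forall e, I e -> R e z) -> (forall e, I e -> club R (C e)) ->
  club R (fun x => forall e, I e -> C e x).
Proof.
  intros Hz HC. split.
  - intros g Hg e Ie. apply (HC e Ie). eapply limit_point_mono; eauto. intros x Hx; apply Hx; auto.
  - intros b. destruct (common_limit I z C Hz) with (b0 := b) as [g [hg Hg]].
    { intros e Ie. apply (HC e Ie). }
    exists g. split; auto. intros e Ie. apply (HC e Ie). auto.
Qed.

Lemma club_inter_extra (A : T -> Prop) (I : T -> Prop) z (C : T -> T -> Prop) :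
  club R A -> (forall e, I e -> R e z) -> (forall e, I e -> club R (C e)) ->
  club R (fun x => A x /\ forall e, I e -> C e x).
Proof.
  intros HA Hz HC. destruct (unbT z) as [z' hz'].
  apply club_ext with (X := fun x => forall e, I e \/ e = z -> (e = z -> A x) /\ (e <> z -> C e x)).
  - intros x. split.
    + intros H. split. apply (H z); auto. intros e Ie. apply (H e); auto. intro; subst. eapply irr; eauto.
    + intros [Ax H] e Ie. split; auto. intros ne. destruct Ie; [auto|congruence].
  - apply club_inter with (z := z').
    + intros e [Ie| ->]; eauto using trans.
    + intros e [Ie| ->].
      * apply club_ext with (X := C e); auto. intros x; split; auto.
        -- intros; split; auto. intro; subst; exfalso; eapply irr; eauto.
        -- intros [_ H]; apply H. intro; subst; eapply irr; eauto.
      * apply club_ext with (X := A); auto. intros x; split; auto.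
        -- intros; split; auto. intros; congruence.
        -- intros [H _]; auto.
Qed.

Lemma club_and (A B : T -> Prop) : club R A -> club R B -> club R (fun x => A x /\ B x).
Proof.
  intros HA HB. destruct Hlam as [_ [[t0 _] _]]. destruct (unbT t0) as [z hz].
  apply club_ext with (X := fun x => A x /\ forall e, e = t0 -> B x).
  - intros x; split; intros H; [split; [apply H | apply (proj2 H t0); reflexivity] | split; [apply H| intros e ->; apply H]].
  - apply club_inter_extra with (z := z); auto. intros e ->; auto.
Qed.

Lemma club_acc (E : T -> Prop) : club R E -> club R (limit_point R E).
Proof.
  intros HE. split.
  - intros g [[a [[[x [Ex hx]] _] ha]] H]. split.
    + exists x. split; eauto using trans.
    + intros b hb. destruct (H b hb) as [a' [[_ Ha'] [h1 h2]]].
      destruct (Ha' b h1) as [y [Ey [h3 h4]]]. exists y. split; eauto using trans.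
  - intros b. destruct Hlam as [_ [[t0 _] _]]. destruct (unbT t0) as [z hz].
    destruct (common_limit (fun e => e = t0) z (fun _ => E)) with (b0 := b) as [g [hg Hg]].
    + intros e ->; auto.
    + intros e _. apply HE.
    + exists g. split; auto. apply (Hg t0); auto.
Qed.

Lemma sup_ex (X : T -> Prop) z : (forall x, X x -> le R x z) -> exists b, is_sup R X b.
Proof.
  intro Hz. destruct (least_spec (fun b => forall x, X x -> le R x b)) as [H1 H2].
  { exists z; auto. }
  eexists. split; eauto.
Qed.

Lemma sup_uniq (X : T -> Prop) a b : is_sup R X a -> is_sup R X b -> a = b.
Proof. intros [A1 A2] [B1 B2]. apply le_antisym; auto. Qed.

Lemma sup_in (E X : T -> Prop) b : (forall g, limit_point R E g -> E g) -> subset X E ->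
  (exists x, X x) -> is_sup R X b -> E b.
Proof.
  intros HE HXE [x0 Hx0] [Hub Hl]. destruct (classic (X b)) as [Xb|nXb]; [apply HXE; auto|].
  apply HE. apply (limit_point_mono X E); auto. split.
  - exists x0. split; auto. destruct (Hub x0 Hx0) as [h|h]; auto. subst; contradiction.
  - intros b' hb'. apply NNPP; intro Hn. assert (forall x, X x -> le R x b') as Hb'.
    { intros x Xx. apply not_lt_le. intro h. apply Hn. exists x. split; auto. split; auto.
      destruct (Hub x Xx) as [h'|h']; auto. subst; contradiction. }
    apply Hl in Hb'. eapply le_not_lt; eauto.
Qed.

Lemma drop_le (C E : T -> Prop) x : Drop R C E x ->
  exists a, C a /\ (exists y, E y /\ R y a) /\ is_sup R (fun y => E y /\ R y a) x /\ le R x a.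
Proof.
  intros [a [Ca [Hne Hs]]]. exists a. split; auto. split; auto. split; auto.
  apply Hs. intros y [_ hy]. apply lt_le; auto.
Qed.

Lemma drop_sub (C E : T -> Prop) : (forall g, limit_point R E g -> E g) -> subset (Drop R C E) E.
Proof.
  intros HE x [a [Ca [Hne Hs]]]. apply (sup_in E (fun y => E y /\ R y a) x HE); auto.
  intros y [Ey _]; auto.
Qed.

Lemma drop_closed d (C E : T -> Prop) : club_of R d C -> (forall g, limit_point R E g -> E g) ->
  closed_below R d (Drop R C E).
Proof.
  intros [[HCs HCc] HCu] HE. split.
  - intros x Hx. destruct (drop_le C E x Hx) as [a [Ca [_ [_ hle]]]]. eapply le_lt_trans; eauto.
  - intros g hg Hlp.
    assert (Eg : E g). { apply HE. eapply limit_point_mono; [apply drop_sub; auto| eauto]. }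
    destruct (classic (C g)) as [Cg|nCg].
    + exists g. split; auto. split.
      * destruct Hlp as [[x [Dx hx]] _]. exists x. split; auto. eapply drop_sub; eauto.
      * split. intros x [_ hx]; apply lt_le; auto.
        intros b Hb. apply not_lt_le; intro hb. destruct Hlp as [_ Hlp].
        destruct (Hlp b hb) as [x [Dx [h1 h2]]]. assert (le R x b) as hh.
        { apply Hb. split; auto. eapply drop_sub; eauto. }
        eapply le_not_lt; eauto.
    + exfalso. apply nCg. apply HCc; auto.
      assert (Hal : forall x, Drop R C E x -> R x g -> exists a, C a /\ le R x a /\ R a g).
      { intros x Dx hx. destruct (drop_le C E x Dx) as [a [Ca [_ [[Hub _] hle]]]].
        exists a. split; auto. split; auto.
        destruct (trich a g) as [h|[h|h]]; auto.
        - subst; contradiction.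
        - exfalso. assert (le R g x) by (apply Hub; split; auto). eapply le_not_lt; eauto. }
      destruct Hlp as [[x [Dx hx]] Hlp]. split.
      * destruct (Hal x Dx hx) as [a [Ca [_ ha]]]. eauto.
      * intros b hb. destruct (Hlp b hb) as [x' [Dx' [h1 h2]]].
        destruct (Hal x' Dx' h2) as [a [Ca [hle ha]]]. exists a. split; auto. split; auto.
        eapply lt_le_trans; eauto.
Qed.

Lemma drop_sup d (C E : T -> Prop) : club_of R d C -> limit_point R E d ->
  is_sup R (Drop R C E) d.
Proof.
  intros [[HCs HCc] HCu] Hlp. split.
  - intros x Dx. destruct (drop_le C E x Dx) as [a [Ca [_ [_ hle]]]]. apply lt_le.
    eapply le_lt_trans; eauto.
  - intros b Hb. apply not_lt_le; intro hb. destruct Hlp as [_ Hlp].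
    destruct (Hlp b hb) as [e [Ee [h1 h2]]]. destruct (HCu e h2) as [a [Ca ha]].
    destruct (sup_ex (fun y => E y /\ R y a) a) as [s Hs].
    { intros y [_ hy]; apply lt_le; auto. }
    assert (Ds : Drop R C E s). { exists a. split; auto. split; eauto. }
    assert (le R e s) by (apply Hs; split; auto).
    assert (le R s b) by auto.
    apply (irr b). eapply lt_le_trans; [eauto|]. eapply le_trans; eauto.
Qed.

Lemma incr_ge (phi : T -> T) beta : (forall x y, R x y -> R y beta -> R (phi x) (phi y)) ->
  forall x, R x beta -> le R x (phi x).
Proof.
  intros Hinc x. induction x as [x IH] using (well_founded_ind wf). intro hx.
  apply not_lt_le; intro h. assert (R (phi x) beta) as h' by eauto using trans.
  pose proof (IH _ h h') as H1. pose proof (Hinc _ _ h hx) as H2.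
  eapply le_not_lt; eauto.
Qed.

Lemma drop_otp d (C E : T -> Prop) : club_of R d C -> otp R C kappa -> cf_eq R d kappa ->
  is_sup R (Drop R C E) d -> otp R (Drop R C E) kappa.
Proof.
  intros HC [fC [fC1 [fC2 fC3]]] [_ Hcf] Hsup.
  set (D := Drop R C E).
  assert (HDs : forall x, D x -> R x d).
  { intros x Dx. destruct (drop_le C E x Dx) as [a [Ca [_ [_ hle]]]].
    eapply le_lt_trans; eauto. apply HC; auto. }
  destruct (coll_bounded D d HDs) as [beta [_ Hot]].
  assert (Hcof : cofinal_in R d D).
  { split. intros x Dx; auto. intros b hb. apply NNPP; intro Hn.
    assert (forall x, D x -> le R x b) as Hb.
    { intros x Dx. apply lt_le. destruct (trich x b) as [h|[h|h]]; auto; exfalso; apply Hn; exists x;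
      split; auto; [subst; apply le_refl | apply lt_le; auto]. }
    apply Hsup in Hb. eapply le_not_lt; eauto. }
  pose proof (Hcf D beta Hcof Hot) as Hkb.
  assert (le R beta kappa) as Hbk.
  { apply not_lt_le; intro hkb. destruct Hot as [fD [fD1 [fD2 fD3]]].
    set (yx := fun xi => epsilon Hinh (fun y => D y /\ fD y = xi)).
    assert (Hyx : forall xi, R xi beta -> D (yx xi) /\ fD (yx xi) = xi).
    { intros xi hxi. apply epsilon_spec. auto. }
    set (p := fun y => least (fun a => C a /\ (exists e, E e /\ R e a) /\ is_sup R (fun e => E e /\ R e a) y)).
    assert (Hp : forall y, D y -> C (p y) /\ (exists e, E e /\ R e (p y)) /\ is_sup R (fun e => E e /\ R e (p y)) y).
    { intros y Dy. apply (least_spec (fun a => C a /\ (exists e, E e /\ R e a) /\ is_sup R (fun e => E e /\ R e a) y)).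
      exact Dy. }
    assert (Hpm : forall y y', D y -> D y' -> R y y' -> R (p y) (p y')).
    { intros y y' Dy Dy' hyy. destruct (Hp y Dy) as [Ca [_ Hs]]. destruct (Hp y' Dy') as [Ca' [_ Hs']].
      destruct (trich (p y) (p y')) as [h|[h|h]]; auto; exfalso.
      - rewrite h in Hs. rewrite (sup_uniq _ _ _ Hs Hs') in hyy. eapply irr; eauto.
      - assert (le R y' y) as hh.
        { apply Hs'. intros e [Ee he]. apply Hs. split; eauto using trans. }
        eapply le_not_lt; eauto. }
    set (phi := fun xi => fC (p (yx xi))).
    assert (Hphi : forall x y, R x y -> R y beta -> R (phi x) (phi y)).
    { intros x y hxy hy. assert (hx : R x beta) by eauto using trans.
      destruct (Hyx x hx) as [Dx ex]. destruct (Hyx y hy) as [Dy ey].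
      apply fC2; try apply Hp; auto. apply Hpm; auto.
      destruct (trich (yx x) (yx y)) as [h|[h|h]]; auto; exfalso.
      - rewrite h, ey in ex. subst. eapply irr; eauto.
      - apply fD2 in h; auto. rewrite ex, ey in h. eapply irr; eapply trans; eauto. }
    pose proof (incr_ge phi beta Hphi kappa hkb) as H1.
    destruct (Hyx kappa hkb) as [Dk _].
    assert (R (phi kappa) kappa) as H2. { apply fC1. apply Hp; auto. }
    eapply le_not_lt; eauto. }
  rewrite <- (le_antisym _ _ Hbk Hkb). exact Hot.
Qed.

Definition succ x := least (fun y => R x y).
Lemma succ_spec x : R x (succ x) /\ forall y, R x y -> le R (succ x) y.
Proof. apply least_spec. apply unbT. Qed.

Lemma succ_inj x y : succ x = succ y -> x = y.
Proof.
  intro e. destruct (trich x y) as [h|[h|h]]; auto; exfalso.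
  - pose proof (proj2 (succ_spec x) y h). rewrite e in H. eapply le_not_lt; eauto. apply succ_spec.
  - pose proof (proj2 (succ_spec y) x h). rewrite <- e in H. eapply le_not_lt; eauto. apply succ_spec.
Qed.

Definition is_succ t := exists x, t = succ x.

Lemma iter_ge l n : le R l (Nat.iter n succ l).
Proof.
  induction n; simpl. apply le_refl. eapply le_trans; eauto. apply lt_le, succ_spec.
Qed.

Lemma decomp t : exists l n, ~ is_succ l /\ t = Nat.iter n succ l.
Proof.
  induction t as [t IH] using (well_founded_ind wf).
  destruct (classic (is_succ t)) as [[x ->]|ns].
  - destruct (IH x (proj1 (succ_spec x))) as [l [n [h1 h2]]]. exists l, (S n). split; auto.
    simpl. congruence.
  - exists t, 0. auto.
Qed.

Lemma decomp_uniq l l' n n' : ~ is_succ l -> ~ is_succ l' ->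
  Nat.iter n succ l = Nat.iter n' succ l' -> l = l' /\ n = n'.
Proof.
  intros hl hl'. revert n'. induction n; intros [|n'] e; simpl in e.
  - auto.
  - exfalso; apply hl; eexists; eauto.
  - exfalso; apply hl'; eexists; eauto.
  - apply succ_inj in e. destruct (IHn n' e); auto.
Qed.

Lemma iter_lt l n : R l kappa -> R (Nat.iter n succ l) kappa.
Proof.
  intro hl. induction n; simpl; auto. destruct Hk as [_ Hlim].
  destruct (Hlim _ IHn) as [g [h1 h2]]. eapply le_lt_trans; [|apply h2]. apply succ_spec; auto.
Qed.

Definition inhP : inhabited (T * nat) := match Hinh with inhabits t => inhabits (t, 0) end.
Definition dl xi := epsilon inhP (fun p : T * nat => ~ is_succ (fst p) /\ xi = Nat.iter (snd p) succ (fst p)).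
Lemma dl_spec xi : ~ is_succ (fst (dl xi)) /\ xi = Nat.iter (snd (dl xi)) succ (fst (dl xi)).
Proof.
  unfold dl. apply epsilon_spec. destruct (decomp xi) as [l [n H]]. exists (l, n). auto.
Qed.
Definition Pn xi n := Nat.iter (Cantor.to_nat (snd (dl xi), n)) succ (fst (dl xi)).

Lemma Pn_lt xi n : R xi kappa -> R (Pn xi n) kappa.
Proof.
  intro h. apply iter_lt. destruct (dl_spec xi) as [_ e]. eapply le_lt_trans; [|apply h].
  rewrite e at 2. apply iter_ge.
Qed.

Lemma Pn_inj xi xi' n n' : Pn xi n = Pn xi' n' -> xi = xi' /\ n = n'.
Proof.
  unfold Pn. intro e. destruct (dl_spec xi) as [h1 e1]. destruct (dl_spec xi') as [h1' e1'].
  destruct (decomp_uniq _ _ _ _ h1 h1' e) as [el en]. apply Cantor.to_nat_inj in en.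
  injection en as en1 en2. split; auto. rewrite e1, e1', el, en1. reflexivity.
Qed.

Section Count.
Variables (mu : T) (g w : T -> T).
Definition isnext z z' := R z z' /\ R z' mu /\ g z' = g z /\
  forall z'', R z z'' -> R z'' mu -> g z'' = g z -> le R z' z''.
Inductive rank : T -> nat -> Prop :=
| rk0 z : ~ (exists z', R z z' /\ R z' mu /\ g z' = g z) -> rank z 0
| rkS z z' n : isnext z z' -> rank z' n -> rank z (S n).

Hypothesis Hw : forall z1 z2, R z1 z2 -> R z2 mu -> g z1 = g z2 -> R (w z2) (w z1).

Lemma rank_ex z : R z mu -> exists n, rank z n.
Proof.
  induction z as [z IH] using (well_founded_ind (wf_inverse_image T T R w wf)). intro hz.
  destruct (classic (exists z', R z z' /\ R z' mu /\ g z' = g z)) as [Hex|Hn].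
  - destruct (least_spec _ Hex) as [[h1 [h2 h3]] h4].
    set (z' := least _) in *.
    destruct (IH z') as [n Hn]; [apply Hw; auto | auto | ].
    exists (S n). apply rkS with z'; auto. split; [auto|split; [auto|split; [auto| intros; apply h4; auto]]].
  - exists 0. constructor; auto.
Qed.

Lemma rank_uniq z n n' : rank z n -> rank z n' -> n = n'.
Proof.
  intro H. revert n'. induction H as [z Hn|z z' n Hnx Hr IH]; intros n' H'; inversion H'; subst; auto.
  - exfalso. apply Hn. destruct H as [a [b [c0 _]]]. eauto.
  - exfalso. apply H. destruct Hnx as [a [b [c0 _]]]. eauto.
  - f_equal. apply IH. assert (z' = z'0) as ->; auto.
    destruct Hnx as [a [b [c0 d0]]]. destruct H as [a' [b' [c' d']]]. apply le_antisym; auto.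
Qed.

Lemma rank_dec z1 n1 : rank z1 n1 -> forall z2 n2, R z1 z2 -> R z2 mu -> g z2 = g z1 ->
  rank z2 n2 -> (n2 < n1)%nat.
Proof.
  induction 1 as [z Hn|z z' n Hnx Hr IH]; intros z2 n2 h1 h2 h3 Hr2.
  - exfalso. apply Hn. eauto.
  - destruct Hnx as [a [b [c0 d0]]]. destruct (d0 z2 h1 h2 h3) as [hl| ->].
    + assert (n2 < n)%nat; [|lia]. apply (IH z2); auto. congruence.
    + rewrite (rank_uniq _ _ _ Hr2 Hr). lia.
Qed.
End Count.

Lemma counting mu (Hmu : R kappa mu) (Hcard : is_cardinal R mu) (g w : T -> T) :
  (forall z, R z mu -> R (g z) kappa) ->
  (forall z1 z2, R z1 z2 -> R z2 mu -> g z1 = g z2 -> R (w z2) (w z1)) -> False.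
Proof.
  intros Hg Hw.
  set (r := fun z => epsilon (inhabits 0) (rank mu g z)).
  assert (Hr : forall z, R z mu -> rank mu g z (r z)).
  { intros z hz. apply epsilon_spec. apply (rank_ex mu g w Hw z hz). }
  destruct (inj_collapse (fun z => R z mu) (fun z => Pn (g z) (r z)) kappa) as [beta [f [Hb [F1 [F2 F3]]]]].
  - intros z hz. apply Pn_lt. auto.
  - intros x y hx hy e. apply Pn_inj in e. destruct e as [e1 e2].
    destruct (trich x y) as [h|[h|h]]; auto; exfalso.
    + pose proof (rank_dec mu g x (r x) (Hr x hx) y (r y) h hy (eq_sym e1) (Hr y hy)). lia.
    + pose proof (rank_dec mu g y (r y) (Hr y hy) x (r x) h hx e1 (Hr x hx)). lia.
  - apply (Hcard beta). eapply le_lt_trans; eauto. exists f. split; [auto | split; [auto | ]].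
    intros b hb. destruct (F3 b hb) as [x [hx e]]; eauto.
Qed.

Lemma main_aux (S : T -> Prop) (HScf : forall d, S d -> cf_eq R d kappa)
  (HSst : stationary R S) (c : T -> T -> Prop)
  (Hc : forall d, S d -> club_of R d (c d) /\ otp R (c d) kappa)
  (E' : T -> Prop) (HE' : club R E') mu (Hmu : R kappa mu) (Hcard : is_cardinal R mu) :
  exists E : T -> Prop,
    club R E /\ subset E E' /\
    (forall d, S d -> closed_below R d (Drop R (c d) E)) /\
    (forall E'' : T -> Prop, club R E'' ->
       stationary R (fun d => S d /\
          subset (Drop R (c d) E) E'' /\
          is_sup R (Drop R (c d) E) d /\
          otp R (Drop R (c d) E) kappa)).
Proof.
  apply NNPP; intro Hno.
  set (good := fun E G d => subset (Drop R (c d) E) G /\ is_sup R (Drop R (c d) E) d /\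
                            otp R (Drop R (c d) E) kappa).
  assert (Hfail : forall E, club R E -> subset E E' ->
            exists G, club R G /\ forall d, S d -> G d -> ~ good E G d).
  { intros E HE HEE'. apply NNPP; intro Hn. apply Hno. exists E. split; auto; split; auto; split.
    - intros d Sd. apply drop_closed. apply Hc; auto. apply HE.
    - intros E'' HE'' C HC. apply NNPP; intro Hn2. apply Hn. exists (fun x => E'' x /\ C x).
      split. apply club_and; auto.
      intros d Sd [hE'' hC] [Hsub [Hs Ho]]. apply Hn2. exists d. split; [|auto]. split; auto.
      split; [|auto]. intros x Dx. apply (Hsub x Dx). }
  set (H := fun E => epsilon (inhabits (fun _ : T => True))
     (fun G => club R G /\ (club R E -> subset E E' -> forall d, S d -> G d -> ~ good E G d))).
  assert (HH : forall E, club R (H E) /\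
     (club R E -> subset E E' -> forall d, S d -> H E d -> ~ good E (H E) d)).
  { intro E. apply (epsilon_spec (inhabits (fun _ : T => True))
     (fun G => club R G /\ (club R E -> subset E E' -> forall d, S d -> G d -> ~ good E G d))).
    destruct (classic (club R E /\ subset E E')) as [[h1 h2]|hn].
    - destruct (Hfail E h1 h2) as [G [hG1 hG2]]. exists G. split; auto.
    - exists E'. split; auto. }
  set (Es := Fix wf (fun _ => T -> Prop) (fun z rec => fun x => E' x /\ forall xi (h : R xi z), H (rec xi h) x)).
  assert (Heq : forall z, Es z = fun x => E' x /\ forall xi, R xi z -> H (Es xi) x).
  { intro z. unfold Es at 1. rewrite fix_unfold. reflexivity. }
  assert (Eclub : forall z, club R (Es z)).
  { intro z. rewrite Heq. apply club_inter_extra with (z := z); auto. intros e _; apply HH. }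
  assert (Esub : forall z, subset (Es z) E').
  { intros z x. rewrite Heq. intros [h _]; auto. }
  assert (Emono : forall z1 z2, R z1 z2 -> subset (Es z2) (Es z1) /\ subset (Es z2) (H (Es z1))).
  { intros z1 z2 h. split; intros x; rewrite (Heq z2); intros [h1 h2].
    - rewrite Heq. split; auto. intros xi hxi. apply h2. eauto using trans.
    - apply h2; auto. }
  destruct (HSst (limit_point R (Es mu)) (club_acc _ (Eclub mu))) as [d [Sd Hlp]].
  destruct (Hc d Sd) as [Hcd Hotp].
  assert (Emu_d : Es mu d). { apply (proj1 (Eclub mu)); auto. }
  set (badp := fun z a => c d a /\ (exists y, Es z y /\ R y a) /\
                 exists b, is_sup R (fun y => Es z y /\ R y a) b /\ ~ H (Es z) b).
  assert (Hbad : forall z, R z mu -> exists a, badp z a).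
  { intros z hz. apply NNPP; intro Hn.
    apply (proj2 (HH (Es z)) (Eclub z) (Esub z) d Sd).
    - apply (proj2 (Emono z mu hz)); auto.
    - assert (Hs : is_sup R (Drop R (c d) (Es z)) d).
      { apply drop_sup; auto. eapply limit_point_mono; [|eauto]. apply (Emono z mu hz). }
      split; [|split; auto].
      + intros x [a [Ca [ne Hs']]]. apply NNPP; intro hx. apply Hn. exists a. split; auto. split; auto.
        exists x; auto.
      + apply drop_otp with d; auto. }
  set (al := fun z => epsilon Hinh (badp z)).
  assert (Hal : forall z, R z mu -> badp z (al z)).
  { intros z hz. apply epsilon_spec. auto. }
  set (bz := fun z => epsilon Hinh (fun b => is_sup R (fun y => Es z y /\ R y (al z)) b /\ ~ H (Es z) b)).
  assert (Hbz : forall z, R z mu -> is_sup R (fun y => Es z y /\ R y (al z)) (bz z) /\ ~ H (Es z) (bz z)).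
  { intros z hz. exact (epsilon_spec Hinh (fun b => is_sup R (fun y => Es z y /\ R y (al z)) b /\ ~ H (Es z) b) (proj2 (proj2 (Hal z hz)))). }
  destruct Hotp as [f [f1 [f2 f3]]].
  apply (counting mu Hmu Hcard (fun z => f (al z)) bz).
  - intros z hz. apply f1. apply (Hal z hz).
  - intros z1 z2 h12 hz2 e. assert (hz1 : R z1 mu) by eauto using trans.
    destruct (Hal z1 hz1) as [Ca1 [ne1 _]]. destruct (Hal z2 hz2) as [Ca2 [ne2 _]].
    assert (al z1 = al z2) as ea.
    { destruct (trich (al z1) (al z2)) as [h|[h|h]]; auto; exfalso.
      - apply f2 in h; auto. rewrite e in h. eapply irr; eauto.
      - apply f2 in h; auto. rewrite e in h. eapply irr; eauto. }
    destruct (Hbz z1 hz1) as [[S1a S1b] N1]. destruct (Hbz z2 hz2) as [S2 N2].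
    destruct (Emono z1 z2 h12) as [M1 M2].
    assert (le R (bz z2) (bz z1)) as hle.
    { apply S2. intros y [Ey hy]. apply S1a. split; auto. rewrite ea; auto. }
    assert (Es z2 (bz z2)) as Ein.
    { apply (sup_in (Es z2) (fun y => Es z2 y /\ R y (al z2)) (bz z2)); auto.
      apply Eclub. intros y [Ey _]; auto. }
    destruct hle as [hl| he]; auto. exfalso. apply N1. rewrite <- he. apply M2; auto.
Qed.
End Dev.

Theorem mainTheorem2 (T : Type) (lt : T -> T -> Prop)
  (Hwo : is_wellorder lt) (Hlam : lambda_regular lt)
  (kappa : T) (Hkap : regular lt kappa) (Hsucc : succ_lt_lambda lt kappa)
  (S : T -> Prop) (HScf : forall d, S d -> cf_eq lt d kappa)
  (HSst : stationary lt S)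
  (c : T -> T -> Prop)
  (Hc : forall d, S d -> club_of lt d (c d) /\ otp lt (c d) kappa)
  (E' : T -> Prop) (HE' : club lt E') :
  exists E : T -> Prop,
    club lt E /\ subset E E' /\
    (forall d, S d -> closed_below lt d (Drop lt (c d) E)) /\
    (forall E'' : T -> Prop, club lt E'' ->
       stationary lt (fun d => S d /\
          subset (Drop lt (c d) E) E'' /\
          is_sup lt (Drop lt (c d) E) d /\
          otp lt (Drop lt (c d) E) kappa)).
Proof.
  assert (Hinh : inhabited T).
  { destruct Hlam as [_ [[t _] _]]. exact (inhabits t). }
  destruct Hkap as [_ [Hk _]]. destruct Hsucc as [mu [Hmu Hcard]].
  eapply main_aux; eauto.
Qed.
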